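(* Let $A$ be an $m$-dimensional permutation array of even order $n$ defined by a bijection $\varphi:[n_1]\times\cdots\times[n_{m-1}]\to[n_m]$. Let $E=\{i\in[m-1]: n_i\text{ is even}\}$ and $\theta=1-\prod_{i\in E}\frac{n_i-1}{n_i}$ (with $\theta=0$ if $E=\emptyset$). If $\theta<\frac{n-2}{2n}$, then there is an $n_1\times\cdots\times n_m$ window in the periodic extension of $A$ which has a repeated difference vector. In particular, if $A$ is an $m$-dimensional Costas array with $\theta<\frac{n-2}{2n}$, then $A$ is not periodic Costas.
   Context: For $n\in\mathbb{N}$, $[n]=\{1,\dots,n\}$; $m\ge2$, all $n_i\ge2$. A binary array $A:[n_1]\times\cdots\times[n_m]\to\{0,1\}$ is an $m$-dimensional permutation array if there exist $k$ with $1\le k<m$ and a bijection $\varphi:[n_1]\times\cdots\times[n_k]\to[n_{k+1}]\times\cdots\times[n_m]$ with $A(a_1,\dots,a_m)=1$ iff $\varphi(a_1,\dots,a_k)=(a_{k+1},\dots,a_m)$ (here $k=m-1$); points with value 1 are dots; the order is the number of dots, here $n=n_1\cdots n_{m-1}=n_m$. The periodic extension $\mathbb{A}:\mathbb{Z}^m\to\{0,1\}$ is $\mathbb{A}(a_1,\dots,a_m)=A(a_1',\dots,a_m')$ with $a_i'\in[n_i]$, $a_i'\equiv a_i\pmod{n_i}$; an $n_1\times\cdots\times n_m$ window is the restriction of $\mathbb{A}$ to a box $\prod_i\{k_i,\dots,k_i+n_i-1\}$, $k_i\in\mathbb{Z}$. The difference vector from dot $(a_i)$ to a distinct dot $(w_i)$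 is $\langle w_i-a_i\rangle_i$; a window has a repeated difference vector if two distinct ordered pairs of distinct dots in it have equal difference vectors. An $m$-dimensional Costas array is a permutation array with no repeated difference vector; it is periodic Costas if every $n_1\times\cdots\times n_m$ window of its periodic extension has no repeated difference vector. *)

(* Defs.v *)
From HB Require Import structures.
From mathcomp Require Import all_boot all_order all_algebra.
Set Implicit Arguments. Unset Strict Implicit. Unset Printing Implicit Defensive.
Import Order.TTheory GRing.Theory Num.Theory.
Local Open Scope ring_scope.

(* An m-dimensional array with m = k.+1 (k >= 1).  A point of Z^m is a pair
   (x, z) with x : the first k = m-1 coordinates and z : the last one.
   Coordinates are 0-indexed: [n_i] is represented by {0, ..., n_i - 1}. *)
Definition pt (k : nat) := ({ffun 'I_k -> int} * int)%type.

Definition in_box k (n : 'I_k -> nat) (nm : nat) (p : pt k) : bool :=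
  [forall i, (0 <= p.1 i) && (p.1 i < (n i)%:Z)] && (0 <= p.2) && (p.2 < nm%:Z).

(* A (binary array; only its values on the box matter) is the permutation
   array defined by the bijection phi : [n_1] x ... x [n_{m-1}] -> [n_m]. *)
Definition perm_array_by k (n : 'I_k -> nat) (nm : nat)
  (A : {ffun 'I_k -> int} -> int -> bool) (phi : {ffun 'I_k -> int} -> int) : Prop :=
  [/\ (forall x : {ffun 'I_k -> int}, [forall i, (0 <= x i) && (x i < (n i)%:Z)] ->
         (0 <= phi x) && (phi x < nm%:Z)),
      (forall x y : {ffun 'I_k -> int}, [forall i, (0 <= x i) && (x i < (n i)%:Z)] ->
         [forall i, (0 <= y i) && (y i < (n i)%:Z)] -> phi x = phi y -> x = y),
      (forall z, 0 <= z < nm%:Z -> exists2 x : {ffun 'I_k -> int},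
         [forall i, (0 <= x i) && (x i < (n i)%:Z)] & phi x = z) &
      (forall p : pt k, in_box n nm p -> A p.1 p.2 = (phi p.1 == p.2))].

Definition per_ext k (n : 'I_k -> nat) (nm : nat)
  (A : {ffun 'I_k -> int} -> int -> bool) (p : pt k) : bool :=
  A [ffun i => modz (p.1 i) (n i)%:Z] (modz p.2 nm%:Z).

Definition diffv k (p q : pt k) : pt k :=
  ([ffun i => q.1 i - p.1 i], q.2 - p.2).

Definition rep_diff k (S : pt k -> bool) : Prop :=
  exists p1 p2 p3 p4 : pt k,
    [/\ S p1, S p2, S p3 & S p4] /\
    [/\ p1 != p2, p3 != p4, (p1, p2) != (p3, p4) & diffv p1 p2 = diffv p3 p4].

Definition in_window k (n : 'I_k -> nat) (nm : nat) (b : {ffun 'I_k -> int}) (c : int)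
  (p : pt k) : bool :=
  [forall i, (b i <= p.1 i) && (p.1 i < b i + (n i)%:Z)] && (c <= p.2) && (p.2 < c + nm%:Z).

Definition window_dots k (n : 'I_k -> nat) (nm : nat)
  (A : {ffun 'I_k -> int} -> int -> bool) b c : pt k -> bool :=
  fun p => in_window n nm b c p && per_ext n nm A p.

Definition costas_dots k (n : 'I_k -> nat) (nm : nat)
  (A : {ffun 'I_k -> int} -> int -> bool) : Prop :=
  ~ rep_diff (fun p => in_box n nm p && A p.1 p.2).

Definition periodic_costas k (n : 'I_k -> nat) (nm : nat)
  (A : {ffun 'I_k -> int} -> int -> bool) : Prop :=
  forall b c, ~ rep_diff (window_dots n nm A b c).

Definition theta k (n : 'I_k -> nat) : rat :=
  1 - \prod_(i < k | ~~ odd (n i)) (((n i)%:R - 1) / (n i)%:R).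

(* Main.v *)
Require Import Defs.
From mathcomp Require Import all_boot all_order all_algebra zify ring lra.
Import Order.TTheory GRing.Theory Num.Theory.
Local Open Scope ring_scope.

Lemma modcan (a N t : int) : 0 <= a < N -> ((a + N * t) %% N)%Z = a.
Proof. move=> H. by rewrite addrC mulrC modzMDl modz_small. Qed.

Definition liftP (N a a' r : int) :=
  exists t t' s c : int,
   [/\ c <= a + N * t < c + N, c <= a' + N * t' < c + N,
       c <= a + N * t + (r + N * s) < c + N,
       c <= a' + N * t' + (r + N * s) < c + N & r + N * s != 0].

Lemma lift_core (N a a' r : int) : 0 < N -> 0 <= a -> a <= a' -> a' < N -> 0 < r < N ->
  ~ (r * 2 = N /\ (a' - a) * 2 = N) -> liftP N a a' r.
Proof.
move=> N0 a0 aa a'N rN nB.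
have [h1|h1] := lerP (a' - a + r) (N - 1).
  by exists 0, 0, 0, a; split; lia.
have [h2|h2] := lerP (N + 1) (a' - a + r).
  by exists 1, 0, (-1), (a' + r - N); split; lia.
have h3 : a' - a + r = N by lia.
have [h4|h4] := ltrP (r * 2) N.
  by exists 1, 0, 0, a'; split; lia.
have [h5|h5] := ltrP N (r * 2).
  by exists 0, 0, (-1), (a + r - N); split; lia.
exfalso; apply: nB; lia.
Qed.

Lemma lift2 (N a a' r : int) : 0 < N -> 0 <= a < N -> 0 <= a' < N -> 0 < r < N ->
  ~ (r * 2 = N /\ ((a' - a) * 2 = N \/ (a - a') * 2 = N)) -> liftP N a a' r.
Proof.
move=> N0 ha ha' hr nB.
have [h|h] := lerP a a'.
  have nB' : ~ (r * 2 = N /\ (a' - a) * 2 = N) by move=> [? ?]; apply: nB; split => //; left.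
  have h1 : 0 <= a by lia.
  have h2 : a' < N by lia.
  exact: (@lift_core N a a' r N0 h1 h h2 hr nB').
have : liftP N a' a r.
  have nB' : ~ (r * 2 = N /\ (a - a') * 2 = N) by move=> [? ?]; apply: nB; split => //; right.
  have h1 : 0 <= a' by lia.
  have h2 : a < N by lia.
  have h3 : a' <= a by lia.
  exact: (@lift_core N a' a r N0 h1 h3 h2 hr nB').
case=> t [t' [s [c [H1 H2 H3 H4 H5]]]].
by exists t', t, s, c; split.
Qed.

Lemma modS (u N : int) : 0 <= u < N ->
  (u + 1 < N /\ ((u + 1) %% N)%Z = u + 1) \/ (u + 1 = N /\ ((u + 1) %% N)%Z = 0).
Proof.
move=> H; have [h|h] := ltrP (u + 1) N.
  by left; split => //; rewrite modz_small //; lia.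
right; have E : u + 1 = N by lia.
by split => //; rewrite E modzz.
Qed.

Lemma modD (D N : int) : - N < D < N ->
  (0 <= D /\ (D %% N)%Z = D) \/ (D < 0 /\ (D %% N)%Z = D + N).
Proof.
move=> H; have [h|h] := lerP 0 D.
  by left; split => //; rewrite modz_small //; lia.
right; split => //.
have -> : D = (D + N) + (-1) * N by ring.
by rewrite addrC modzMDl modz_small //; lia.
Qed.
Lemma theta_all2 (k : nat) (n : 'I_k -> nat) (nm : nat) :
  (forall i, n i = 2%N) -> nm = (\prod_(i < k) n i)%N ->
  ~ (theta n < (nm%:R - 2) / (2 * nm%:R)).
Proof.
move=> n2e nmE.
rewrite /theta.
set p := \prod_(_ < k | _) _.
have P : p = \prod_(i < k) ((2%:R - 1) / 2%:R : rat).
  rewrite /p big_mkcond /=; apply: eq_bigr => i _; by rewrite n2e.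
have Q : (nm%:R : rat) = \prod_(i < k) 2%:R.
  rewrite nmE natr_prod; apply: eq_bigr => i _; by rewrite n2e.
have PQ : p * nm%:R = 1.
  rewrite P Q -big_split /=; apply: big1 => i _.
  rewrite -[2%:R]/(2 : rat). by field.
have x0 : (nm%:R : rat) != 0.
  by apply/eqP => E; move: PQ; rewrite E mulr0 => /eqP; rewrite eq_sym oner_eq0.
have Hp : p = (nm%:R)^-1 by apply/(mulIf x0); rewrite PQ mulVf.
have -> : ((nm%:R - 2) / (2 * nm%:R) : rat) = 1/2 - p.
  rewrite Hp; field; by rewrite x0 /=.
lra.
Qed.
Lemma main_constr (k : nat) (n : 'I_k -> nat) (nm : nat)
  (A : {ffun 'I_k -> int} -> int -> bool) (phi : {ffun 'I_k -> int} -> int) (i0 : 'I_k) :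
  (forall i, 2 <= n i)%N -> (3 <= n i0)%N -> (2 <= nm)%N -> perm_array_by n nm A phi ->
  exists b c, rep_diff (window_dots n nm A b c).
Proof.
move=> n2 n03 nm2 [phiB phiI phiS Aphi].
pose inb (x : {ffun 'I_k -> int}) := [forall i, (0 <= x i) && (x i < (n i)%:Z)].
have inbP : forall x, inb x -> forall i, 0 <= x i < (n i)%:Z by move=> x /forallP.
set N := nm%:Z. set n0 := (n i0)%:Z.
have N0 : 1 < N by rewrite /N; lia.
have n00 : 2 < n0 by rewrite /n0; lia.
pose xp (x : {ffun 'I_k -> int}) :=
  [ffun i => if i == i0 then ((x i + 1) %% (n i)%:Z)%Z else x i].
have xpB : forall x, inb x -> inb (xp x).
  move=> x Hx; apply/forallP => i; rewrite ffunE; case: eqP => [->|_]; last exact: (inbP _ Hx).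
  have := inbP _ Hx i0; rewrite -/n0 => hh.
  by have [[hq ->]|[hq ->]] := @modS _ _ hh; lia.
have phiB' : forall x, inb x -> 0 <= phi x < N by move=> x /phiB.
pose g x := ((phi (xp x) - phi x) %% N)%Z.
have gE : forall x, inb x -> (0 <= phi (xp x) - phi x /\ g x = phi (xp x) - phi x)
    \/ (phi (xp x) - phi x < 0 /\ g x = phi (xp x) - phi x + N).
  move=> x Hx; apply: modD; have := phiB' _ Hx; have := phiB' _ (xpB _ Hx); lia.
have xpne : forall x, inb x -> xp x != x.
  move=> x Hx; apply/eqP => E.
  have := congr1 (fun f : {ffun 'I_k -> int} => f i0) E; rewrite /= ffunE eqxx -/n0.
  have := inbP _ Hx i0; rewrite -/n0 => hh.
  by have [[hq ->]|[hq ->]] := @modS _ _ hh; lia.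
have gnz : forall x, inb x -> g x != 0.
  move=> x Hx; apply/eqP => g0; move/eqP: (xpne x Hx); apply.
  apply: (phiI _ _ (xpB _ Hx) Hx).
  have := phiB' _ Hx; have := phiB' _ (xpB _ Hx); have := gE x Hx; rewrite g0; lia.
have gbd : forall x, inb x -> 0 < g x < N.
  move=> x Hx; have := gnz x Hx; have := gE x Hx; have := phiB' _ Hx;
  have := phiB' _ (xpB _ Hx); lia.
have noB : forall x y, inb x -> inb y -> g x = g y ->
    ~ (g x * 2 = N /\ ((phi y - phi x) * 2 = N \/ (phi x - phi y) * 2 = N)).
  move=> x y Hx Hy Hg [h1 h2].
  have e1 : xp x = y.
    apply: (phiI _ _ (xpB _ Hx) Hy).
    have := phiB' _ Hx; have := phiB' _ (xpB _ Hx); have := phiB' _ Hy; have := gE x Hx; lia.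
  have e2 : xp y = x.
    apply: (phiI _ _ (xpB _ Hy) Hx).
    have := phiB' _ Hx; have := phiB' _ (xpB _ Hy); have := phiB' _ Hy; have := gE y Hy; lia.
  have := congr1 (fun f : {ffun 'I_k -> int} => f i0) e2; rewrite -e1 /= !ffunE eqxx -/n0.
  have := inbP _ Hx i0; rewrite -/n0 => hh.
  have [[hh1 ->]|[hh1 ->]] := @modS _ _ hh.
    have hh' : 0 <= x i0 + 1 < n0 by lia.
    by have [[hq ->]|[hq ->]] := @modS _ _ hh'; lia.
  have hh' : (0:int) <= 0 < n0 by lia.
  by have [[hq ->]|[hq ->]] := @modS _ _ hh'; lia.
have exz : forall z : 'I_nm, exists x, inb x && (phi x == (z : nat)%:Z).
  move=> z; have hz : 0 <= (z : nat)%:Z < nm%:Z by have := ltn_ord z; lia.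
  have [x Hx Hp] := phiS _ hz; exists x; by rewrite /inb Hx Hp eqxx.
pose xs z := xchoose (exz z).
have xsP : forall z, inb (xs z) /\ phi (xs z) = (z : nat)%:Z.
  by move=> z; have /andP[? /eqP] := xchooseP (exz z).
have gb : forall z, (`|g (xs z)|%N < nm)%N.
  move=> z; have := gbd _ (xsP z).1; rewrite /N; lia.
pose G z := Ordinal (gb z).
have [x [y [Hx Hy nxy Hg]]] : exists x y, [/\ inb x, inb y, phi x != phi y & g x = g y].
  case: (boolP (injectiveb G)) => [/injectiveP Ginj | /injectivePn [z1 [z2 nz Gz]]].
    have N0' : (0 < nm)%N by lia.
    have /codomP [z Hz] := injF_onto Ginj (Ordinal N0').
    exfalso; have := gbd _ (xsP z).1; move: (congr1 val Hz) => /= Hz'; lia.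
  exists (xs z1), (xs z2); split; try exact: (xsP _).1.
    rewrite (xsP z1).2 (xsP z2).2; apply: contra nz => /eqP [E]; apply/eqP/val_inj.
    exact: E.
  have := congr1 val Gz => /= E; have := gbd _ (xsP z1).1; have := gbd _ (xsP z2).1; lia.
have hx := phiB' _ Hx; have hy := phiB' _ Hy.
have hxi := inbP _ Hx i0; have hyi := inbP _ Hy i0; rewrite -/n0 in hxi hyi.
have [tv [tv' [sv [c [V1 V2 V3 V4 V5]]]]] : liftP N (phi x) (phi y) (g x).
  have Np : 0 < N by lia.
  exact: (@lift2 _ _ _ _ Np hx hy (gbd x Hx) (noB x y Hx Hy Hg)).
have [th [th' [sh [bh [H1 H2 H3 H4 H5]]]]] : liftP n0 (x i0) (y i0) 1.
  have Np : 0 < n0 by lia.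
  have h1 : (0:int) < 1 < n0 by lia.
  have nb : ~ (1 * 2 = n0 /\ ((y i0 - x i0) * 2 = n0 \/ (x i0 - y i0) * 2 = n0)) by lia.
  exact: (@lift2 _ _ _ _ Np hxi hyi h1 nb).
have [ex Ex] : exists e, g x = phi (xp x) - phi x + N * e.
  by case: (gE x Hx) => [[_ ->]|[_ ->]]; [exists 0 | exists 1]; ring.
have [ey Ey] : exists e, g x = phi (xp y) - phi y + N * e.
  by rewrite Hg; case: (gE y Hy) => [[_ ->]|[_ ->]]; [exists 0 | exists 1]; ring.
pose b : {ffun 'I_k -> int} := [ffun i => if i == i0 then bh else 0].
have winP : forall (z : {ffun 'I_k -> int}) (U Y : int), inb z -> bh <= U < bh + n0 ->
    c <= Y < c + N ->
    in_window n nm b c ([ffun i => if i == i0 then U else z i], Y).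
  move=> z U Y Hz HU HY; rewrite /in_window /=.
  apply/andP; split; [apply/andP; split|]; try lia.
  apply/forallP => i; rewrite !ffunE; case: eqP => [->|_]; first by rewrite -/n0.
  rewrite add0r; exact: (inbP _ Hz i).
have dotP : forall (z w : {ffun 'I_k -> int}) (U Y : int), inb w ->
    (U %% n0)%Z = w i0 -> (forall i, i != i0 -> z i = w i) -> (Y %% N)%Z = phi w ->
    per_ext n nm A ([ffun i => if i == i0 then U else z i], Y).
  move=> z w U Y Hw HU Hz HY; rewrite /per_ext /=.
  have -> : [ffun i => (([ffun i => if i == i0 then U else z i] i) %% (n i)%:Z)%Z] = w.
    apply/ffunP => i; rewrite !ffunE; case: eqP => [->//|/eqP ne].
    rewrite Hz // modz_small //; exact: (inbP _ Hw i).
  rewrite -/N HY (Aphi (w, phi w)) /= ?eqxx //.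
  rewrite /in_box /=; have /andP[q1 q2] := phiB _ Hw.
  rewrite q1 q2 !andbT; apply/forallP => i; exact: (inbP _ Hw i).
have mx1 : ((x i0 + n0 * th) %% n0)%Z = x i0 by rewrite modcan.
have my1 : ((y i0 + n0 * th') %% n0)%Z = y i0 by rewrite modcan.
have mx2 : ((x i0 + n0 * th + (1 + n0 * sh)) %% n0)%Z = xp x i0.
  have -> : x i0 + n0 * th + (1 + n0 * sh) = (th + sh) * n0 + (x i0 + 1) by ring.
  by rewrite modzMDl ffunE eqxx.
have my2 : ((y i0 + n0 * th' + (1 + n0 * sh)) %% n0)%Z = xp y i0.
  have -> : y i0 + n0 * th' + (1 + n0 * sh) = (th' + sh) * n0 + (y i0 + 1) by ring.
  by rewrite modzMDl ffunE eqxx.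
have vx1 : ((phi x + N * tv) %% N)%Z = phi x by rewrite modcan.
have vy1 : ((phi y + N * tv') %% N)%Z = phi y by rewrite modcan.
have vx2 : ((phi x + N * tv + (g x + N * sv)) %% N)%Z = phi (xp x).
  have -> : phi x + N * tv + (g x + N * sv) = phi (xp x) + N * (tv + sv + ex) by rewrite Ex; ring.
  by rewrite modcan //; exact: phiB' (xpB _ Hx).
have vy2 : ((phi y + N * tv' + (g x + N * sv)) %% N)%Z = phi (xp y).
  have -> : phi y + N * tv' + (g x + N * sv) = phi (xp y) + N * (tv' + sv + ey) by rewrite Ey; ring.
  by rewrite modcan //; exact: phiB' (xpB _ Hy).
have xne : forall (w : {ffun 'I_k -> int}) i, i != i0 -> w i = xp w i.
  by move=> w i /negPf ne; rewrite ffunE ne.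
exists b, c.
exists ([ffun i => if i == i0 then x i0 + n0 * th else x i], phi x + N * tv).
exists ([ffun i => if i == i0 then x i0 + n0 * th + (1 + n0 * sh) else x i],
        phi x + N * tv + (g x + N * sv)).
exists ([ffun i => if i == i0 then y i0 + n0 * th' else y i], phi y + N * tv').
exists ([ffun i => if i == i0 then y i0 + n0 * th' + (1 + n0 * sh) else y i],
        phi y + N * tv' + (g x + N * sv)).
split; split.
- apply/andP; split; first exact: winP.
  by apply: (dotP _ x) => // i _.
- apply/andP; split; first exact: winP.
  by apply: (dotP _ (xp x)) => //; [exact: xpB | move=> i ne; exact: xne].
- apply/andP; split; first exact: winP.
  by apply: (dotP _ y) => // i _.
- apply/andP; split; first exact: winP.
  by apply: (dotP _ (xp y)) => //; [exact: xpB | move=> i ne; exact: xne].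
- apply/eqP => E; have := congr1 snd E => /= E2; move/eqP: V5; apply.
  have e : g x + N * sv = (phi x + N * tv + (g x + N * sv)) - (phi x + N * tv) by ring.
  by rewrite e -E2 subrr.
- apply/eqP => E; have := congr1 snd E => /= E2; move/eqP: V5; apply.
  have e : g x + N * sv = (phi y + N * tv' + (g x + N * sv)) - (phi y + N * tv') by ring.
  by rewrite e -E2 subrr.
- apply/eqP => E1; have := congr1 (fun q : pt k * pt k => q.1.2) E1 => /= E.
  have := congr1 (fun t => (t %% N)%Z) E; rewrite /= vx1 vy1 => Eq.
  by move: nxy; rewrite Eq eqxx.
- rewrite /diffv /=; congr pair.
  apply/ffunP => i; rewrite !ffunE; case: eqP => _; first ring.
  by rewrite !subrr.
  rewrite /=; ring.
Qed.




Theorem mainTheorem10 (k : nat) (n : 'I_k -> nat) (nm : nat)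
  (A : {ffun 'I_k -> int} -> int -> bool) (phi : {ffun 'I_k -> int} -> int) :
  (1 <= k)%N ->
  (forall i, 2 <= n i)%N -> (2 <= nm)%N ->
  nm = (\prod_(i < k) n i)%N ->
  ~~ odd nm ->
  perm_array_by n nm A phi ->
  theta n < (nm%:R - 2) / (2 * nm%:R) ->
  (exists b c, rep_diff (window_dots n nm A b c)) /\
  (costas_dots n nm A -> ~ periodic_costas n nm A).
Proof.
move=> k1 n2 nm2 nmE nmev Hp hth.
have [i0 Hi0] : exists i0, (3 <= n i0)%N.
  case: (boolP [exists i, 3 <= n i]%N) => [/existsP//|/existsPn Hall].
  exfalso; apply: (@theta_all2 k n nm _ nmE hth) => i.
  by have := Hall i; have := n2 i; lia.
have main := @main_constr k n nm A phi i0 n2 Hi0 nm2 Hp.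
split => // _ Hpc; case: main => b [c H]; exact: (Hpc b c H).
Qed.
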